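(* Let $(Z_n)_{n\ge0}$ be a linear fractional Galton–Watson process in i.i.d. random environment (as in the context) which is subcritical, i.e. $R^{(-1)}_\infty<\infty=R_\infty$ a.s. Then $$\Pi_n\,\mathbf{P}^{(n:1)}(Z_n>0)=\frac{1}{\mathbf{E}^{(n:1)}(Z_n\mid Z_n>0)}\ \xrightarrow{n\to\infty}\ \frac{1}{1+R^{(-1)}_\infty}\quad\text{a.s.},$$ and $$\Big\|\mathbf{P}^{(n:1)}(Z_n\in\cdot\mid Z_n>0)-\mathrm{Geom}_+\Big(\frac{1}{1+R^{(-1)}_\infty}\Big)\Big\|\ \xrightarrow{n\to\infty}\ 0\quad\text{a.s.},$$ where $\|\cdot\|$ is the total variation norm.
   Context: Let $(A_n,B_n)_{n\ge1}$ be i.i.d. copies of $(A,B)$ with $\mathbb{P}(A>0,B>0,A+B\ge1)=1$; $e_n=(A_n,B_n)$, $\mathbf{e}=(e_n)_{n\ge1}$. For $a,b>0$, $a+b\ge1$, $LF(a,b)$ is the distribution on $\mathbb{N}_0$ whose generating function $f$ satisfies $1/(1-f(s))=a/(1-s)+b$ for $s\in[0,1)$; equivalently $LF(a,b)=\frac{a+b-1}{a+b}\delta_0+\frac{1}{a+b}\mathrm{Geom}_+(\frac{a}{a+b})$, where $\mathrm{Geom}_+(p)$ is the geometric law on $\{1,2,\dots\}$ with weights $p(1-p)^{k-1}$. $(Z_n)_{n\ge0}$, $Z_0=1$, is a Galton–Watson process in random environment: given $\mathbf{e}$, each individual of generation $n-1$ independently has offspring distribution $LF(A_n,B_n)$.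 $\Pi_0=1$, $\Pi_n=\prod_{k=1}^nA_k$, $R_n=\sum_{k=1}^n\Pi_{k-1}B_k$, $R_\infty=\lim R_n$, $R^{(-1)}_n=\sum_{k=1}^n\Pi_k^{-1}B_k$, $R^{(-1)}_\infty=\lim R^{(-1)}_n$. $\mathbf{P}^{(n:1)},\mathbf{E}^{(n:1)}$ denote the quenched probability/expectation for the process run in the reversed environment $(e_n,e_{n-1},\dots,e_1)$ up to time $n$, i.e. given $(e_1,\dots,e_n)$, individuals of generation $k-1$ ($1\le k\le n$) have offspring law $LF(A_{n-k+1},B_{n-k+1})$. *)

(* Defs.v *)
From HB Require Import structures.
From mathcomp Require Import all_boot all_order all_algebra.
From mathcomp Require Import all_classical all_reals all_analysis.
Set Implicit Arguments. Unset Strict Implicit. Unset Printing Implicit Defensive.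
Import Order.TTheory GRing.Theory Num.Theory.
Import numFieldNormedType.Exports.
Local Open Scope classical_set_scope.
Local Open Scope ring_scope.

Section Defs.
Variable R : realType.

Definition geomP (p : R) (k : nat) : R :=
  if k == 0%N then 0 else p * (1 - p) ^+ k.-1.

Definition LF (a b : R) (k : nat) : R :=
  (if k == 0%N then (a + b - 1) / (a + b) else 0)
  + (a + b)^-1 * geomP (a / (a + b)) k.

Fixpoint convn (q : nat -> R) (i : nat) : nat -> R :=
  match i with
  | 0%N => fun j => if j == 0%N then 1 else 0
  | i'.+1 => fun j => \sum_(m < j.+1) convn q i' m * q (j - m)%N
  end.

(* Quenched law of Z_k (Z_0 = 1) when individuals of generation k-1
   (k >= 1) have offspring law offs k. *)
Fixpoint gw_law (offs : nat -> nat -> R) (k : nat) : nat -> R :=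
  match k with
  | 0%N => fun j => if j == 1%N then 1 else 0
  | k'.+1 => fun j =>
      fine (\sum_(0 <= i <oo) ((gw_law offs k' i * convn (offs k) i j)%:E))%E
  end.

(* Reversed environment (e_n, ..., e_1): generation k-1 uses LF(A_{n-k+1},B_{n-k+1}) *)
Definition rev_offs (a b : nat -> R) (n : nat) : nat -> nat -> R :=
  fun k => LF (a (n - k + 1)%N) (b (n - k + 1)%N).

Definition law_rev (a b : nat -> R) (n : nat) : nat -> R :=
  gw_law (rev_offs a b n) n.

Definition surv_rev (a b : nat -> R) (n : nat) : R := 1 - law_rev a b n 0.

Definition condmean_rev (a b : nat -> R) (n : nat) : R :=
  fine (\sum_(0 <= j <oo) ((j%:R * law_rev a b n j)%:E))%E / surv_rev a b n.

Definition condlaw_rev (a b : nat -> R) (n : nat) (j : nat) : R :=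
  if j == 0%N then 0 else law_rev a b n j / surv_rev a b n.

(* total variation distance (as l^1 norm of the difference) *)
Definition tv (p q : nat -> R) : \bar R :=
  (\sum_(0 <= j <oo) (`|p j - q j|%:E))%E.

Definition Pi (a : nat -> R) (n : nat) : R := \prod_(1 <= k < n.+1) a k.
Definition Rn (a b : nat -> R) (n : nat) : R :=
  \sum_(1 <= k < n.+1) Pi a k.-1 * b k.
Definition Rinv (a b : nat -> R) (n : nat) : R :=
  \sum_(1 <= k < n.+1) (Pi a k)^-1 * b k.
Definition Rinv_inf (a b : nat -> R) : R := limn (Rinv a b).

End Defs.

Definition iid_seq (d : measure_display) (T : measurableType d) (R : realType)
  (P : probability T R) (e : nat -> T -> R * R) : Prop :=
  (forall n, (1 <= n)%N -> measurable_fun setT (e n)) /\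
  (forall n (S : set (R * R)), (1 <= n)%N -> measurable S ->
      P (e n @^-1` S) = P (e 1%N @^-1` S)) /\
  (forall (I : seq nat) (S : nat -> set (R * R)),
      uniq I -> all (fun i => (1 <= i)%N) I ->
      (forall i, i \in I -> measurable (S i)) ->
      P (\bigcap_(i in [set i | i \in I]) (e i @^-1` S i)) =
      (\prod_(i <- I) P (e i @^-1` S i))%E).

(* Main.v *)
Require Import Defs.
From HB Require Import structures.
From mathcomp Require Import all_boot all_order all_algebra.
From mathcomp Require Import all_classical all_reals all_analysis.
From mathcomp Require Import ring lra.
Import Order.TTheory GRing.Theory Num.Theory.
Import numFieldNormedType.Exports.
Local Open Scope classical_set_scope.
Local Open Scope ring_scope.

Lemma goodS_meas (R : realType) :
  measurable [set z : R * R | 0 < z.1 /\ 0 < z.2 /\ 1 <= z.1 + z.2].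
Proof.
have -> : [set z : R * R | 0 < z.1 /\ 0 < z.2 /\ 1 <= z.1 + z.2] =
  (`]0, +oo[%classic `*` `]0, +oo[%classic) `&`
  ((fun z : R * R => z.1 + z.2) @^-1` `[1, +oo[).
  apply/seteqP; split => z /=.
    by move=> [h1 [h2 h3]]; rewrite !in_itv /= h1 h2 h3.
  by rewrite !in_itv /= !andbT => -[[h1 h2] h3].
apply: measurableI.
  by apply: measurableX; exact: measurable_itv.
rewrite -[X in measurable X]setTI.
apply: (@measurable_realfun.measurable_funD _ _ _ setT fst snd) => //.
Qed.

Lemma ae_good (d : measure_display) (T : measurableType d) (R : realType)
  (P : probability T R) (A B : nat -> T -> R) :
  iid_seq P (fun n w => (A n w, B n w)) ->
  {ae P, forall w, 0 < A 1%N w /\ 0 < B 1%N w /\ 1 <= A 1%N w + B 1%N w} ->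
  {ae P, forall w, forall n, (1 <= n)%N ->
     0 < A n w /\ 0 < B n w /\ 1 <= A n w + B n w}.
Proof.
move=> [iidm [iidd _]] h1.
apply: ae_foralln => n.
have [n0|n1] := leqP 1 n; last first.
  by apply: nearW => w.
set S := [set z : R * R | 0 < z.1 /\ 0 < z.2 /\ 1 <= z.1 + z.2].
have mS : measurable S by exact: goodS_meas.
have mSc : measurable (~` S) by exact: measurableC.
have me k : (1 <= k)%N -> measurable ((fun w => (A k w, B k w)) @^-1` (~` S)).
  by move=> k1; rewrite -[X in measurable X]setTI; apply: (iidm k k1).
case: h1 => N [mN N0 sN].
exists ((fun w => (A n w, B n w)) @^-1` (~` S)); split.
- exact: me.
- etransitivity; first exact: (iidd n _ n0 mSc).
  apply/eqP; rewrite eq_le measure_ge0 andbT -N0.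
  apply: le_measure; rewrite ?inE //.
  exact: me.
- move=> w /= hw hS; apply: hw => _.
  by move: hS; rewrite /S /= => -[h1 [h2 h3]].
Qed.

Section Alg.
Variable R : realType.
Implicit Types (a b u : R).

Lemma LF0 a b : LF a b 0 = (a + b - 1) / (a + b).
Proof. by rewrite /LF /geomP /= mulr0 addr0. Qed.

Lemma LFS a b k : a + b != 0 ->
  LF a b k.+1 = a / (a + b) ^+ 2 * (b / (a + b)) ^+ k.
Proof.
move=> ab; rewrite /LF /geomP /= add0r.
have -> : 1 - a / (a + b) = b / (a + b) by field.
by rewrite mulrA; congr (_ * _); field.
Qed.

Lemma LF_ge0 a b k : 0 < a -> 0 <= b -> 1 <= a + b -> 0 <= LF a b k.
Proof.
move=> a0 b0 ab; have abp : 0 < a + b by lra.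
case: k => [|k].
  by rewrite LF0 divr_ge0 //; lra.
rewrite LFS ?gt_eqF // mulr_ge0 // ?exprn_ge0 ?divr_ge0 ?exprn_ge0 //; lra.
Qed.

Lemma geo_sum u N : \sum_(k < N) u ^+ k * (1 - u) = 1 - u ^+ N.
Proof.
elim: N => [|N IH]; first by rewrite big_ord0 expr0 subrr.
by rewrite big_ord_recr /= IH exprS; ring.
Qed.

Lemma LF_psum a b N : 0 < a -> 0 <= b -> 1 <= a + b ->
  \sum_(j < N) LF a b j <= 1.
Proof.
move=> a0 b0 ab; have abp : 0 < a + b by lra.
case: N => [|N]; first by rewrite big_ord0.
rewrite big_ord_recl LF0.
under eq_bigr do rewrite /bump /= LFS ?gt_eqF //.
have -> : \sum_(i < N) a / (a + b) ^+ 2 * (b / (a + b)) ^+ i =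
   (a + b)^-1 * \sum_(i < N) (b / (a + b)) ^+ i * (1 - b / (a + b)).
  rewrite mulr_sumr; apply: eq_bigr => i _.
  have -> : 1 - b / (a + b) = a / (a + b) by field; lra.
  by field; lra.
rewrite geo_sum.
have h1 : 0 <= (b / (a + b)) ^+ N by rewrite exprn_ge0 // divr_ge0 //; lra.
have -> : (a + b - 1) / (a + b) + (a + b)^-1 * (1 - (b / (a + b)) ^+ N)
  = 1 - (a + b)^-1 * (b / (a + b)) ^+ N by field; lra.
rewrite lerBlDr lerDl mulr_ge0 // invr_ge0; lra.
Qed.


Lemma convn0 (q : nat -> R) j : convn q 0 j = (j == 0%N)%:R.
Proof. by rewrite /=; case: (j == 0%N). Qed.

Lemma convnS (q : nat -> R) i j :
  convn q i.+1 j = \sum_(m < j.+1) convn q i m * q (j - m)%N.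
Proof. by []. Qed.

Lemma convn1 (q : nat -> R) j : convn q 1 j = q j.
Proof.
rewrite convnS big_ord_recl /= mul1r subn0 big1 ?addr0 // => i _.
by rewrite /bump /= add1n mul0r.
Qed.

Lemma convn_ge0 (q : nat -> R) i j : (forall k, 0 <= q k) -> 0 <= convn q i j.
Proof.
move=> q0; elim: i j => [|i IH] j.
  by rewrite /=; case: (j == 0%N).
by rewrite convnS; apply: sumr_ge0 => m _; rewrite mulr_ge0.
Qed.

Lemma conv_psum (c q : nat -> R) N :
  \sum_(j < N) \sum_(m < j.+1) c m * q (j - m)%N =
  \sum_(m < N) c m * \sum_(l < N - m) q l.
Proof.
elim: N => [|N IH]; first by rewrite !big_ord0.
rewrite big_ord_recr /= IH.
rewrite [RHS]big_ord_recr /= subSnn big_ord1.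
rewrite [X in _ = X + _](eq_bigr (fun m : 'I_N => c m * \sum_(l < N - m) q l
    + c m * q (N - m)%N)); last first.
  move=> m _; rewrite /= subSn; last exact: ltnW (ltn_ord m).
  by rewrite big_ord_recr /= mulrDr.
rewrite big_split /= [X in _ + X = _]big_ord_recr /= subnn; ring.
Qed.

Lemma convn_psum (q : nat -> R) i N : (forall k, 0 <= q k) ->
  (forall N, \sum_(j < N) q j <= 1) -> \sum_(j < N) convn q i j <= 1.
Proof.
move=> q0 q1; elim: i N => [|i IH] N.
  case: N => [|N]; first by rewrite big_ord0.
  rewrite big_ord_recl /= big1 ?addr0 // => j _.
have -> : \sum_(j < N) convn q i.+1 j =
  \sum_(j < N) \sum_(m < j.+1) convn q i m * q (j - m)%N by [].
rewrite conv_psum; apply: (le_trans _ (IH N)).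
apply: ler_sum => m _; rewrite -[X in _ <= X]mulr1.
by apply: ler_wpM2l; [exact: convn_ge0 | exact: q1].
Qed.

Lemma convn_le1 (q : nat -> R) i j : (forall k, 0 <= q k) ->
  (forall N, \sum_(j < N) q j <= 1) -> convn q i j <= 1.
Proof.
move=> q0 q1; apply: (le_trans _ (convn_psum q i j.+1 q0 q1)).
rewrite big_ord_recr /= lerDr; apply: sumr_ge0 => k _; exact: convn_ge0.
Qed.


Lemma rec_uniq (K q x y : nat -> R) (s : R) : s * q 0%N != 1 ->
  (forall j, x j = K j + s * \sum_(m < j.+1) q (j - m)%N * x m) ->
  (forall j, y j = K j + s * \sum_(m < j.+1) q (j - m)%N * y m) ->
  forall j, x j = y j.
Proof.
move=> sq hx hy; elim/ltn_ind => j IH.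
have e : x j - y j = s * q 0%N * (x j - y j).
  rewrite {1}hx {1}hy !big_ord_recr /= subnn.
  rewrite (eq_bigr (fun m : 'I_j => q (j - m)%N * y m)); last first.
    by move=> m _; rewrite IH.
  ring.
apply/eqP; rewrite -subr_eq0; apply/eqP.
have : (1 - s * q 0%N) * (x j - y j) = 0 by rewrite mulrBl mul1r -e subrr.
move/eqP; rewrite mulf_eq0 => /orP[|/eqP //].
by rewrite subr_eq0 eq_sym (negbTE sq).
Qed.

Lemma cand_rec (h q : nat -> R) (w1 uw q0 Q1 u H1 U h0 : R) :
  q 0%N = q0 -> (forall k, q k.+1 = Q1 * u ^+ k) ->
  h 0%N = h0 -> (forall k, h k.+1 = H1 * U ^+ k) ->
  h0 = w1 * q0 + uw * (q0 * h0) ->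
  H1 = w1 * Q1 + uw * (Q1 * h0 + q0 * H1) ->
  U * (1 - uw * q0) = u + uw * (Q1 - u * q0) ->
  forall j, h j = w1 * q j + uw * \sum_(m < j.+1) q (j - m)%N * h m.
Proof.
move=> eq0 eqS eh0 ehS I0 I1 I2.
have qSS n : q n.+2 = u * q n.+1 by rewrite !eqS exprS; ring.
have hSS n : h n.+2 = U * h n.+1 by rewrite !ehS exprS; ring.
case=> [|k].
  by rewrite big_ord1 subn0 eq0 eh0.
elim: k => [|k IH].
  rewrite big_ord_recr big_ord1 /=.
  have -> : (1 - 0 = 1)%N by []. have -> : (1 - 1 = 0)%N by [].
  rewrite eq0 eh0 (ehS 0%N) (eqS 0%N) expr0 !mulr1.
  by rewrite {1}I1; ring.
set T := fun j => \sum_(m < j.+1) q (j - m)%N * h m.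
have Trec : T k.+2 = u * T k.+1 + (Q1 - u * q0) * h k.+1 + q0 * h k.+2.
  rewrite /T big_ord_recr big_ord_recr /= subnn eq0.
  rewrite [in RHS]big_ord_recr /= subnn eq0.
  have -> : (k.+2 - k.+1 = 1)%N by rewrite subSS subSnn.
  rewrite eqS expr0 mulr1.
  rewrite (eq_bigr (fun m : 'I_k.+1 => u * (q (k.+1 - m)%N * h m))); last first.
    move=> m _ /=; rewrite subSn; last by rewrite ltnW // ltnS ltn_ord.
    by rewrite (@subSn m k (ltn_ord m)) qSS mulrA.
  rewrite -mulr_sumr; ring.
rewrite -/(T k.+2) Trec hSS qSS.
have -> : w1 * (u * q k.+1) + uw * (u * T k.+1 + (Q1 - u * q0) * h k.+1 + q0 * (U * h k.+1))
  = u * (w1 * q k.+1 + uw * T k.+1) + uw * ((Q1 - u * q0) * h k.+1 + q0 * (U * h k.+1)) by ring.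
rewrite -[w1 * q k.+1 + uw * T k.+1]/(w1 * q k.+1 + uw * \sum_(m < k.+2) q (k.+1 - m)%N * h m).
rewrite -IH.
apply/eqP; rewrite -subr_eq0; apply/eqP.
have -> : U * h k.+1 - (u * h k.+1 + uw * ((Q1 - u * q0) * h k.+1 + q0 * (U * h k.+1)))
  = (U * (1 - uw * q0) - (u + uw * (Q1 - u * q0))) * h k.+1 by ring.
by rewrite I2 subrr mul0r.
Qed.


Lemma nneseries_shift1 (f : nat -> \bar R) : (forall i, (0 <= f i)%E) ->
  (\sum_(0 <= i <oo) f i = f 0%N + \sum_(0 <= i <oo) f i.+1)%E.
Proof.
move=> f0; rewrite nneseries_recl //; congr (_ + _)%E.
rewrite -(nneseries_addn 1) //; apply: eq_eseriesr => i _; by rewrite addn1.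
Qed.

Lemma nneseries_leR (f : nat -> R) (M : R) : (forall i, 0 <= f i) ->
  (forall N, \sum_(i < N) f i <= M) ->
  (\sum_(0 <= i <oo) (f i)%:E <= M%:E)%E.
Proof.
move=> f0 fM; apply: lime_le.
  by apply: is_cvg_nneseries => n _ _; rewrite lee_fin.
by apply: nearW => N; rewrite sumEFin lee_fin big_mkord.
Qed.

Lemma nneseries_ge0R (f : nat -> R) : (forall i, 0 <= f i) ->
  (0 <= \sum_(0 <= i <oo) (f i)%:E)%E.
Proof. by move=> f0; apply: nneseries_ge0 => n _ _; rewrite lee_fin. Qed.

Lemma step (al be a b : R) : 0 < al -> 0 <= be -> 1 <= al + be ->
  0 < a -> 0 < b -> 1 <= a + b -> forall j,
  fine (\sum_(0 <= i <oo) ((LF al be i * convn (LF a b) i j)%:E))%E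
  = LF (al * a) (al * b + be) j.
Proof.
move=> al0 be0 albe a0 b0 ab.
set w := LF al be; set q := LF a b.
have w0 i : 0 <= w i by exact: LF_ge0.
have q0 k : 0 <= q k by apply: LF_ge0 => //; lra.
have q1 N : \sum_(j < N) q j <= 1 by apply: LF_psum => //; lra.
have c0 i j : 0 <= convn q i j by exact: convn_ge0.
have c1 i j : convn q i j <= 1 by exact: convn_le1.
have t0 i j : 0 <= w i * convn q i j by rewrite mulr_ge0.
set G := fun j => (\sum_(0 <= i <oo) ((w i.+1 * convn q i.+1 j)%:E))%E.
have HG j : (\sum_(0 <= i <oo) ((w i * convn q i j)%:E) = (w 0%N * convn q 0 j)%:E + G j)%E.
  by rewrite nneseries_shift1 // => i; rewrite lee_fin.
have G0 j : (0 <= G j)%E by apply: nneseries_ge0R.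
have G1 j : (G j <= 1%:E)%E.
  apply: (@le_trans _ _ (\sum_(0 <= i <oo) ((w i.+1)%:E))%E).
    by apply: lee_nneseries => [i _ _|i _]; rewrite lee_fin // ler_piMr.
  apply: nneseries_leR => // N; apply: (le_trans _ (LF_psum al be N.+1 al0 be0 albe)).
  by rewrite big_ord_recl lerDr.
have Gfin j : G j \is a fin_num.
  by rewrite ge0_fin_numE // (le_lt_trans (G1 j)) // ltry.
set g := fun j => fine (G j).
have Gg j : G j = (g j)%:E by rewrite /g fineK.
have abn : a + b != 0 by rewrite gt_eqF //; lra.
have albn : al + be != 0 by rewrite gt_eqF //; lra.
set uw := be / (al + be).
have wS k : w k.+2 = uw * w k.+1.
  rewrite /w /uw !LFS // (exprS (be / (al + be)) k).
  set z := (be / (al + be)) ^+ k; ring.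
have Grec j : g j = w 1%N * q j + uw * \sum_(m < j.+1) q (j - m)%N * g m.
  apply: EFin_inj; rewrite -Gg /G nneseries_shift1; last by move=> i; rewrite lee_fin.
  rewrite convn1 EFinD; congr (_ + _)%E.
  transitivity (\sum_(0 <= i <oo) (\sum_(m < j.+1)
      ((uw * q (j - m)%N) * (w i.+1 * convn q i.+1 m))%:E))%E.
    apply: eq_eseriesr => i _; rewrite sumEFin; congr (_%:E).
    rewrite wS convnS mulr_sumr; apply: eq_bigr => m _; ring.
  rewrite nneseries_sum; last first.
    by move=> m i _; rewrite lee_fin !mulr_ge0 // invr_ge0; lra.
  rewrite mulr_sumr -sumEFin; apply: eq_bigr => m _.
  under eq_eseriesr do rewrite EFinM.
  rewrite nneseriesZl; last by move=> i _; rewrite lee_fin.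
  by rewrite -/(G m) Gg -EFinM mulrA.
have ABn : al * a + (al * b + be) != 0.
  rewrite gt_eqF //; have : 0 < al * a by rewrite mulr_gt0.
  have : 0 <= al * b by rewrite mulr_ge0 //; lra.
  lra.
set h := fun j => if j == 0%N then LF (al * a) (al * b + be) 0 - w 0%N
                  else LF (al * a) (al * b + be) j.
have w1E : w 1%N = al / (al + be) ^+ 2 by rewrite /w LFS // expr0 mulr1.
have hrec := @cand_rec h q (w 1%N) uw ((a + b - 1) / (a + b)) (a / (a + b) ^+ 2)
  (b / (a + b)) ((al * a) / (al * a + (al * b + be)) ^+ 2)
  ((al * b + be) / (al * a + (al * b + be)))
  ((al * a + (al * b + be) - 1) / (al * a + (al * b + be)) - (al + be - 1) / (al + be)).
have hg : forall j, g j = h j.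
  apply: (@rec_uniq (fun j => w 1%N * q j) q g h uw).
  - rewrite lt_eqF //.
    have hu : uw < 1 by rewrite /uw ltr_pdivrMr; lra.
    have uw0 : 0 <= uw by rewrite /uw divr_ge0 //; lra.
    have hq : q 0%N <= 1 by have := q1 1%N; rewrite big_ord1.
    by apply: (le_lt_trans _ hu); rewrite ler_piMr.
  - by move=> j; rewrite [LHS]Grec.
  - apply: hrec.
    + by rewrite /q LF0.
    + by move=> k; rewrite /q LFS.
    + by rewrite /h /= /w !LF0.
    + by move=> k; rewrite /h /= LFS.
    + by rewrite w1E /uw; field; rewrite albn ABn abn.
    + by rewrite w1E /uw; field; rewrite albn ABn abn.
    + by rewrite /uw; field; rewrite ?albn ?ABn ?abn.
move=> j; rewrite HG Gg -EFinD /= hg /h.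
case: j => [|j] /=.
  by rewrite mulr1; ring.
by rewrite mulr0 add0r.
Qed.


Lemma Pi0 (a : nat -> R) : Pi a 0 = 1.
Proof. by rewrite /Pi big_geq. Qed.

Lemma PiS (a : nat -> R) n : Pi a n.+1 = Pi a n * a n.+1.
Proof. by rewrite /Pi big_nat_recr. Qed.

Lemma Rinv0 (a b : nat -> R) : Rinv a b 0 = 0.
Proof. by rewrite /Rinv big_geq. Qed.

Lemma RinvS (a b : nat -> R) n :
  Rinv a b n.+1 = Rinv a b n + (Pi a n.+1)^-1 * b n.+1.
Proof. by rewrite /Rinv big_nat_recr. Qed.

Lemma Pi_gt0 (a : nat -> R) n : (forall k, (1 <= k)%N -> 0 < a k) -> 0 < Pi a n.
Proof.
move=> ha; elim: n => [|n IH]; first by rewrite Pi0.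
by rewrite PiS mulr_gt0 // ha.
Qed.

Lemma Rinv_ge0 (a b : nat -> R) n : (forall k, (1 <= k)%N -> 0 < a k /\ 0 < b k) ->
  0 <= Rinv a b n.
Proof.
move=> ha; elim: n => [|n IH]; first by rewrite Rinv0.
have [h1 h2] := ha n.+1 isT.
have hp : 0 < Pi a n.+1 by apply: Pi_gt0 => k k1; have [] := ha k k1.
rewrite RinvS addr_ge0 // mulr_ge0 // ?invr_ge0; lra.
Qed.

Lemma LF10 : LF (1 : R) 0 = fun j => if j == 1%N then 1 else 0.
Proof.
apply: boolp.funext => -[|j]; first by rewrite LF0 addr0 subrr mul0r.
rewrite LFS ?addr0 ?oner_neq0 // mul0r expr1n divr1 mul1r.
by case: j => [|j]; rewrite ?expr0 // exprS mul0r.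
Qed.

Lemma law_gen (a b : nat -> R) n :
  (forall k, (1 <= k)%N -> 0 < a k /\ 0 < b k /\ 1 <= a k + b k) ->
  forall k, (k <= n)%N ->
  gw_law (rev_offs a b n) k =
    LF (Pi a n / Pi a (n - k)) (Pi a n * (Rinv a b n - Rinv a b (n - k))) /\
  0 <= Pi a n * (Rinv a b n - Rinv a b (n - k)) /\
  1 <= Pi a n / Pi a (n - k) + Pi a n * (Rinv a b n - Rinv a b (n - k)).
Proof.
move=> hab.
have ha k : (1 <= k)%N -> 0 < a k by move=> k1; have [] := hab k k1.
have hP k : 0 < Pi a k by exact: Pi_gt0.
elim=> [|k IH] kn.
  rewrite subn0 divff ?gt_eqF // subrr mulr0 addr0 LF10; split => //; split => //.
have [IH1 [IH2 IH3]] := IH (ltnW kn).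
set m := (n - k.+1)%N.
have nk : (n - k = m.+1)%N by rewrite /m subnSK.
rewrite nk in IH1 IH2 IH3.
have [a0 [b0 ab0]] := hab m.+1 isT.
set al := Pi a n / Pi a m.+1.
set be := Pi a n * (Rinv a b n - Rinv a b m.+1).
have al0 : 0 < al by rewrite /al divr_gt0.
have Pmn : Pi a m != 0 by rewrite gt_eqF.
have amn : a m.+1 != 0 by rewrite gt_eqF.
have e1 : al * a m.+1 = Pi a n / Pi a m.
  by rewrite /al PiS; field; rewrite Pmn amn.
have e2 : al * b m.+1 + be = Pi a n * (Rinv a b n - Rinv a b m).
  by rewrite /be /al RinvS PiS; field; rewrite Pmn amn.
have offsE : rev_offs a b n k.+1 = LF (a m.+1) (b m.+1).
  by rewrite /rev_offs -/m addn1.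
have -> : gw_law (rev_offs a b n) k.+1 = fun j =>
   fine (\sum_(0 <= i <oo) ((gw_law (rev_offs a b n) k i *
      convn (rev_offs a b n k.+1) i j)%:E))%E by [].
rewrite IH1 offsE -e1 -e2.
split.
  by apply: boolp.funext => j; rewrite step.
split.
  by rewrite addr_ge0 // mulr_ge0 //; lra.
have : al * a m.+1 + (al * b m.+1 + be) = al * (a m.+1 + b m.+1) + be by ring.
move=> ->; have : al <= al * (a m.+1 + b m.+1) by rewrite ler_peMr //; lra.
move: IH3; rewrite -/al -/be; lra.
Qed.

Lemma law_revE (a b : nat -> R) n :
  (forall k, (1 <= k)%N -> 0 < a k /\ 0 < b k /\ 1 <= a k + b k) ->
  law_rev a b n = LF (Pi a n) (Pi a n * Rinv a b n).
Proof.
move=> hab; have [e _] := @law_gen a b n hab n (leqnn n).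
rewrite /law_rev e.
by rewrite subnn Pi0 divr1 Rinv0 subr0.
Qed.


Lemma geo_sum_le (v : R) N : 0 <= v < 1 -> \sum_(k < N) v ^+ k <= (1 - v)^-1.
Proof.
move=> /andP[v0 v1].
have t0 : 0 < 1 - v by lra.
have e := geo_sum v N; rewrite -mulr_suml in e.
rewrite -[X in _ <= X]div1r ler_pdivlMr // e; have : 0 <= v ^+ N by exact: exprn_ge0.
lra.
Qed.

Lemma geo_diff (x y : R) N : 0 <= x -> x <= y -> y < 1 ->
  \sum_(k < N) (y ^+ k - x ^+ k) <= (1 - y)^-1 - (1 - x)^-1.
Proof.
move=> x0 xy y1.
have tx : 0 < 1 - x by lra.
have ty : 0 < 1 - y by lra.
have ex := geo_sum x N; have ey := geo_sum y N.
rewrite -mulr_suml in ex; rewrite -mulr_suml in ey.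
have Ex : \sum_(k < N) x ^+ k = (1 - x ^+ N) / (1 - x).
  by rewrite -ex mulfK // gt_eqF.
have Ey : \sum_(k < N) y ^+ k = (1 - y ^+ N) / (1 - y).
  by rewrite -ey mulfK // gt_eqF.
rewrite sumrB Ex Ey.
have h1 : x ^+ N <= y ^+ N by rewrite lerXn2r // nnegrE; lra.
have h2 : (1 - x)^-1 <= (1 - y)^-1 by rewrite lef_pV2 ?posrE //; lra.
have h3 : 0 <= x ^+ N by exact: exprn_ge0.
have h4 : x ^+ N / (1 - x) <= y ^+ N / (1 - y).
  apply: (@le_trans _ _ (x ^+ N / (1 - y))).
    by rewrite ler_wpM2l.
  by rewrite ler_wpM2r // invr_ge0; lra.
have -> : (1 - x ^+ N) / (1 - x) = (1 - x)^-1 - x ^+ N / (1 - x) by rewrite mulrBl mul1r.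
have -> : (1 - y ^+ N) / (1 - y) = (1 - y)^-1 - y ^+ N / (1 - y) by rewrite mulrBl mul1r.
lra.
Qed.

Lemma geo_absdiff (x y : R) N : 0 <= x < 1 -> 0 <= y < 1 ->
  \sum_(k < N) `|y ^+ k - x ^+ k| <= `|(1 - y)^-1 - (1 - x)^-1|.
Proof.
move=> /andP[x0 x1] /andP[y0 y1].
have [xy|yx] := lerP x y.
  have -> : \sum_(k < N) `|y ^+ k - x ^+ k| = \sum_(k < N) (y ^+ k - x ^+ k).
    apply: eq_bigr => k _; rewrite ger0_norm // subr_ge0 lerXn2r // nnegrE.
  apply: (le_trans (geo_diff x y N x0 xy y1)); exact: ler_norm.
have -> : \sum_(k < N) `|y ^+ k - x ^+ k| = \sum_(k < N) (x ^+ k - y ^+ k).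
  apply: eq_bigr => k _; rewrite distrC ger0_norm // subr_ge0 lerXn2r // ?nnegrE //.
  exact: ltW.
rewrite distrC; apply: (le_trans (geo_diff y x N y0 (ltW yx) x1)); exact: ler_norm.
Qed.

Lemma tv_geom_le (r p : R) : 0 < r <= 1 -> 0 < p <= 1 ->
  (tv (geomP r) (geomP p) <= (2 * `|r - p| / r)%:E)%E.
Proof.
move=> /andP[r0 r1] /andP[p0 p1].
apply: nneseries_leR => // N.
apply: (@le_trans _ _ (\sum_(j < N.+1) `|geomP r j - geomP p j|)).
  by rewrite big_ord_recr /= lerDl.
rewrite big_ord_recl /geomP /= subrr normr0 add0r.
set v := 1 - r; set u := 1 - p.
have v01 : 0 <= v < 1 by rewrite /v; apply/andP; split; lra.
have u01 : 0 <= u < 1 by rewrite /u; apply/andP; split; lra.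
apply: (@le_trans _ _ (\sum_(k < N) (`|r - p| * v ^+ k + p * `|v ^+ k - u ^+ k|))).
  apply: ler_sum => k _; rewrite /bump /=.
  have -> : r * v ^+ k - p * u ^+ k = (r - p) * v ^+ k + p * (v ^+ k - u ^+ k) by ring.
  apply: (le_trans (ler_normD _ _)).
  rewrite !normrM (ger0_norm (exprn_ge0 _ _)) ?(ger0_norm (ltW p0)) //.
  by case/andP: v01.
rewrite big_split /= -mulr_sumr -mulr_sumr.
have s1 := geo_sum_le v N v01.
have s2 := geo_absdiff u v N u01 v01.
have ev : (1 - v) = r by rewrite /v; ring.
have eu : (1 - u) = p by rewrite /u; ring.
rewrite ev eu in s1 s2.
have e3 : r^-1 - p^-1 = (p - r) / (r * p) by field; rewrite !gt_eqF.
rewrite e3 in s2.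
apply: (@le_trans _ _ (`|r - p| * r^-1 + p * `|(p - r) / (r * p)|)).
  apply: lerD; first by rewrite ler_wpM2l.
  by rewrite ler_wpM2l //; exact: ltW.
rewrite normrM (ger0_norm (x := (r * p)^-1)); last by rewrite invr_ge0 mulr_ge0 // ltW.
rewrite distrC; set z := `|p - r|.
suff -> : z / r + p * (z / (r * p)) = 2 * z / r by [].
by field; rewrite !gt_eqF.
Qed.


Lemma nneseries_cvgE (f : nat -> R) l : series f @ \oo --> l ->
  (\sum_(0 <= i <oo) (f i)%:E = l%:E)%E.
Proof.
move=> fl; apply: cvg_lim => //.
under eq_fun do rewrite sumEFin.
apply: cvg_EFin; first exact: nearW.
exact: fl.
Qed.

Lemma mean_series (u : R) : 0 <= u < 1 ->
  series (fun k => k.+1%:R * u ^+ k) @ \oo --> ((1 - u) ^+ 2)^-1.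
Proof.
move=> /andP[u0 u1].
set F := fun k => k.+1%:R * u ^+ k.
set S := series F.
set G := series (geometric 1 u).
have F0 k : 0 <= F k by rewrite /F mulr_ge0 // exprn_ge0.
have t0 : 0 < 1 - u by lra.
have Srec N : S N.+1 = 1 + u * (S N + G N).
  rewrite /S /G /series /= big_nat_recl // /F expr0 mulr1.
  congr (_ + _); rewrite -big_split /= mulr_sumr.
  apply: eq_bigr => i _; rewrite exprS (mulrSr 1 i.+1); set w := u ^+ i; ring.
have Gle N : G N * (1 - u) <= 1.
  rewrite /G /series /= big_mkord.
  under eq_bigr do rewrite /geometric mul1r.
  rewrite mulr_suml geo_sum; have : 0 <= u ^+ N by exact: exprn_ge0.
  lra.
have Sinc : {homo S : n m / (n <= m)%N >-> n <= m}.
  by apply: nondecreasing_series => n _ _; exact: F0.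
have Sle N : S N * (1 - u) ^+ 2 <= 1.
  have h1 : S N <= S N.+1 by apply: Sinc.
  rewrite Srec in h1.
  have G0 : 0 <= G N.
    by rewrite /G /series /= sumr_ge0 // => k _; rewrite /geometric mul1r exprn_ge0.
  have k1 : (1 - u) * S N <= 1 + u * G N by lra.
  have k2 := ler_wpM2l (ltW t0) k1.
  have k3 : u * (G N * (1 - u)) <= u by rewrite ler_piMr.
  have -> : S N * (1 - u) ^+ 2 = (1 - u) * ((1 - u) * S N) by ring.
  apply: (le_trans k2).
  have -> : (1 - u) * (1 + u * G N) = (1 - u) + u * (G N * (1 - u)) by ring.
  lra.
have Scvg : cvgn S.
  apply: nondecreasing_is_cvgn => //.
  exists ((1 - u) ^+ 2)^-1 => _ [N _ <-].
  by rewrite -[X in _ <= X]div1r ler_pdivlMr ?exprn_gt0.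
set L := limn S.
have SL : S @ \oo --> L := Scvg.
have S1 : (fun n => S n.+1) @ \oo --> L by rewrite cvg_shiftS.
have GL : G @ \oo --> (1 * (1 - u)^-1).
  by apply: cvg_geometric_series; rewrite ger0_norm.
have S2 : (fun n => S n.+1) @ \oo --> 1 + u * (L + 1 * (1 - u)^-1).
  have -> : (fun n => S n.+1) = (fun n => 1 + u * (S n + G n)).
    by apply: boolp.funext => n; rewrite Srec.
  apply: cvgD; first exact: cvg_cst.
  apply: cvgM; first exact: cvg_cst.
  exact: cvgD.
have e : L = 1 + u * (L + 1 * (1 - u)^-1).
  have h1 := cvg_lim (@Rhausdorff R) S1. have h2 := cvg_lim (@Rhausdorff R) S2. by rewrite -{1}h1 h2.
have e2 : L * (1 - u) - (1 - u)^-1 = L - (1 + u * (L + 1 * (1 - u)^-1)).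
  by field; rewrite gt_eqF.
rewrite -e subrr in e2; move/eqP: e2; rewrite subr_eq0 => /eqP e2.
have -> : ((1 - u) ^+ 2)^-1 = L.
  by rewrite -[L](mulfK (x := 1 - u)) ?gt_eqF // e2; field; rewrite gt_eqF.
exact: SL.
Qed.

Lemma mean_LF (al be : R) : 0 < al -> 0 <= be -> 1 <= al + be ->
  fine (\sum_(0 <= j <oo) ((j%:R * LF al be j)%:E))%E = al^-1.
Proof.
move=> al0 be0 albe.
have albn : al + be != 0 by rewrite gt_eqF //; lra.
set c := al / (al + be) ^+ 2; set u := be / (al + be).
have u01 : 0 <= u < 1.
  by apply/andP; split; [rewrite /u divr_ge0 //; lra | rewrite /u ltr_pdivrMr; lra].
rewrite nneseries_shift1; last by move=> i; rewrite lee_fin mulr_ge0 // LF_ge0.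
rewrite mul0r add0e.
have -> : (\sum_(0 <= i <oo) (i.+1%:R * LF al be i.+1)%:E =
   \sum_(0 <= i <oo) (c * (i.+1%:R * u ^+ i))%:E)%E.
  by apply: eq_eseriesr => i _; rewrite LFS // -/c -/u mulrCA.
rewrite (@nneseries_cvgE _ (c * ((1 - u) ^+ 2)^-1)) /=.
  rewrite /c /u; field.
  rewrite albn gt_eqF //=.
have -> : series (fun i => c * (i.+1%:R * u ^+ i)) =
    (fun n => c * series (fun i => i.+1%:R * u ^+ i) n).
  by apply: boolp.funext => n; rewrite /series /= mulr_sumr.
apply: cvgM; first exact: cvg_cst.
exact: mean_series.
Qed.

Lemma det_main (a b : nat -> R) :
  (forall k, (1 <= k)%N -> 0 < a k /\ 0 < b k /\ 1 <= a k + b k) ->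
  cvgn (Rinv a b) ->
  (forall n, Pi a n * surv_rev a b n = (condmean_rev a b n)^-1) /\
  (fun n => Pi a n * surv_rev a b n) @ \oo --> (1 + Rinv_inf a b)^-1 /\
  (fun n => tv (condlaw_rev a b n) (geomP (1 + Rinv_inf a b)^-1)) @ \oo --> 0%E.
Proof.
move=> hab hcvg.
have ha k : (1 <= k)%N -> 0 < a k by move=> k1; have [] := hab k k1.
have hab2 k : (1 <= k)%N -> 0 < a k /\ 0 < b k by move=> k1; have [? []] := hab k k1.
have hP n : 0 < Pi a n by exact: Pi_gt0.
have hR n : 0 <= Rinv a b n by exact: Rinv_ge0.
set Ri := Rinv_inf a b.
have Ri0 : 0 <= Ri.
  by apply: limr_ge => //; apply: nearW => n; exact: hR.
have one n : 1 <= Pi a n + Pi a n * Rinv a b n.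
  have [_ [_ h]] := @law_gen a b n hab n (leqnn n).
  by move: h; rewrite subnn Pi0 divr1 Rinv0 subr0.
have Pn n : Pi a n + Pi a n * Rinv a b n != 0.
  by rewrite gt_eqF // (lt_le_trans ltr01 (one n)).
have Pn0 n : Pi a n != 0 by rewrite gt_eqF.
have Rn1 n : 1 + Rinv a b n != 0 by rewrite gt_eqF //; have := hR n; lra.
have survE n : surv_rev a b n = (Pi a n + Pi a n * Rinv a b n)^-1.
  rewrite /surv_rev law_revE // LF0; field; exact: Pn.
have PsE n : Pi a n * surv_rev a b n = (1 + Rinv a b n)^-1.
  by rewrite survE; field; rewrite ?Pn0 ?Rn1 ?Pn.
split.
  move=> n; rewrite PsE /condmean_rev law_revE // mean_LF //; last by rewrite mulr_ge0 // ltW.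
  by rewrite survE; field; rewrite ?Pn0 ?Rn1 ?Pn.
split.
  have -> : (fun n => Pi a n * surv_rev a b n) = (fun n => (1 + Rinv a b n)^-1).
    by apply: boolp.funext => n; rewrite PsE.
  apply: cvgV; first by rewrite gt_eqF //; lra.
  by apply: cvgD; [exact: cvg_cst | exact: hcvg].
have condE n : condlaw_rev a b n = geomP (1 + Rinv a b n)^-1.
  apply: boolp.funext => -[|j]; first by rewrite /condlaw_rev /geomP.
  rewrite /condlaw_rev /= law_revE // LFS // survE /geomP /=.
  have -> : Pi a n * Rinv a b n / (Pi a n + Pi a n * Rinv a b n) = 1 - (1 + Rinv a b n)^-1.
    by field; rewrite ?Pn0 ?Rn1 ?Pn.
  set z := (1 - (1 + Rinv a b n)^-1) ^+ j.
  by field; rewrite ?Pn0 ?Rn1 ?Pn.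
set r := fun n => (1 + Rinv a b n)^-1.
set p := (1 + Ri)^-1.
have r01 n : 0 < r n <= 1.
  have h := hR n; have h1 : 0 < 1 + Rinv a b n by lra.
  by rewrite /r invr_gt0 h1 /= invf_le1 // lerDl.
have p01 : 0 < p <= 1.
  have h1 : 0 < 1 + Ri by lra.
  by rewrite /p invr_gt0 h1 /= invf_le1 // lerDl.
have rp : r @ \oo --> p.
  apply: cvgV; first by rewrite gt_eqF //; lra.
  by apply: cvgD; [exact: cvg_cst | exact: hcvg].
apply: (@squeeze_cvge _ _ _ _ (fun=> 0%E) _ (fun n => (2 * `|r n - p| / r n)%:E)).
- apply: nearW => n; rewrite condE; apply/andP; split.
    by apply: nneseries_ge0R => j.
  exact: (tv_geom_le (r n) p (r01 n) p01).
- exact: cvg_cst.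
- apply: cvg_EFin; first exact: nearW.
  have -> : 0 = 2 * `|p - p| / p by rewrite subrr normr0 mulr0 mul0r.
  apply: cvgM; last first.
    apply: cvgV; last exact: rp.
    by rewrite gt_eqF //; case/andP: p01.
  apply: cvgM; first exact: cvg_cst.
  apply: cvg_norm; apply: cvgB => //; exact: cvg_cst.
Qed.

End Alg.

Theorem theorem3p1 (d : measure_display) (T : measurableType d) (R : realType)
  (P : probability T R) (A B : nat -> T -> R) :
  iid_seq P (fun n w => (A n w, B n w)) ->
  {ae P, forall w, 0 < A 1%N w /\ 0 < B 1%N w /\ 1 <= A 1%N w + B 1%N w} ->
  {ae P, forall w, cvgn (Rinv (A ^~ w) (B ^~ w))} ->
  {ae P, forall w, Rn (A ^~ w) (B ^~ w) @ \oo --> +oo} ->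
  {ae P, forall w,
     (forall n,
        Pi (A ^~ w) n * surv_rev (A ^~ w) (B ^~ w) n
        = (condmean_rev (A ^~ w) (B ^~ w) n)^-1) /\
     (fun n => Pi (A ^~ w) n * surv_rev (A ^~ w) (B ^~ w) n) @ \oo
        --> (1 + Rinv_inf (A ^~ w) (B ^~ w))^-1 /\
     (fun n => tv (condlaw_rev (A ^~ w) (B ^~ w) n)
                  (geomP (1 + Rinv_inf (A ^~ w) (B ^~ w))^-1)) @ \oo
        --> 0%E}.
Proof.
move=> iid h1 hcvg _.
have hg := @ae_good d T R P A B iid h1.
apply: (filterS2 _ _ hg hcvg) => w hgw hcw.
exact: (@det_main R (A ^~ w) (B ^~ w) hgw hcw).
Qed.
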